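(* (i) For all $y\in\mathbb{Z}_p$, $S^y\circ\sigma=\sigma\circ S^y+y\,S^{y-1}$ as maps on $C(\mathbb{Z}_p,\mathbb{C}_p)$. (ii) For $\phi\in C(\mathbb{Z}_p,\mathbb{C}_p)$ and $x,y\in\mathbb{Z}_p$, $$T^x(\sigma(\phi))(y)=T^{x+1}(\phi)(y)+y\,T^x(\phi)(y-1),$$ equivalently $\big((\mathbf 1-\mathbf x)^{\star y}\star\sigma(\phi)\big)(x)=\big((\mathbf 1-\mathbf x)^{\star y}\star\phi\big)(x+1)+y\big((\mathbf 1-\mathbf x)^{\star(y-1)}\star\phi\big)(x)$. (iii) If $\psi\in\mathcal{A}$, $\phi\in C(\mathbb{Z}_p,\mathbb{C}_p)$ and $x\in\mathbb{Z}_p$, then $$\big(\psi\star\sigma(\phi)\big)(x)=(\psi\star\phi)(x+1)-\big(D(\psi)\star\phi\big)(x).$$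
   Context: Fix a prime $p$. $\mathbb{C}_p$ denotes the completion of an algebraic closure of $\mathbb{Q}_p$, with absolute value $|\cdot|$ normalized by $|p|=1/p$. $C(\mathbb{Z}_p,\mathbb{C}_p)$ is the $\mathbb{C}_p$-Banach space of continuous functions $\mathbb{Z}_p\to\mathbb{C}_p$ with the sup-norm $\|\cdot\|$. For $n\in\mathbb{Z}_{\ge0}$ and $x\in\mathbb{Z}_p$, $\binom{x}{n}=x(x-1)\cdots(x-n+1)/n!$. For $\phi$ let $(\nabla\phi)(x)=\phi(x+1)-\phi(x)$ and $\sigma(\phi)(x)=\phi(x+1)$; every $\phi$ has Mahler expansion $\phi(x)=\sum_{n\ge0}(\nabla^n\phi)(0)\binom xn$. The convolution $\phi\star\psi$ is the continuous function with Mahler coefficients $(\nabla^n(\phi\star\psi))(0)=\sum_{k=0}^n\binom nk(\nabla^k\phi)(0)(\nabla^{n-k}\psi)(0)$. For $y\in\mathbb{Z}_p$, $S^y(\phi)(x)=\sum_{k\ge0}(-1)^k k!\binom yk\binom xk\phi(x-k)$; for $x\in\mathbb{Z}_p$, $T^x(\phi)(y)=S^y(\phi)(x)$. $\mathbf 1$ is the constant function $1$, $\mathbf x$ is $x\mapsto x$, $(\mathbf 1-\mathbf x)^{\star y}:=S^y(\mathbf 1)$ for $y\in\mathbb{Z}_p$, and $(\mathbf x-\mathbf 1)^{\star n}:=(-1)^nS^n(\mathbf 1)$ for $n\in\mathbb{Z}$. $\mathcal{A}$ is the set of functions $\sum_{n=-\infty}^N a_n(\mathbf x-\mathbf 1)^{\star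 n}$ with $N\in\mathbb{Z}$, $a_n\in\mathbb{C}_p$, $a_n\to0$ as $n\to-\infty$; the coefficients $a_n$ are uniquely determined by the function, and $D:\mathcal{A}\to\mathcal{A}$ is the linear operator $D\big(\sum_{n\le N}a_n(\mathbf x-\mathbf 1)^{\star n}\big)=\sum_{n\le N}na_n(\mathbf x-\mathbf 1)^{\star(n-1)}$. *)

(* Defs.v *)
From HB Require Import structures.
From mathcomp Require Import all_boot all_order all_algebra.
From mathcomp Require Import reals.
From Stdlib Require Import ClassicalEpsilon.
Set Implicit Arguments. Unset Strict Implicit. Unset Printing Implicit Defensive.
Import Order.TTheory GRing.Theory Num.Theory.
Local Open Scope ring_scope.

(* We describe it axiomatically, up to
   isometric isomorphism: a field K with an absolute value |.| : K -> R which is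
   ultrametric, complete, algebraically closed, satisfies |p| = 1/p, and in
   which the elements algebraic over Q_p (= closure of Q in K) are dense.
   These properties characterise C_p (completion of an algebraic closure of Q_p). *)

Section Cp.
Variables (R : realType) (K : fieldType) (abs : K -> R).

(* closure of Q in K : this is Q_p *)
Definition in_Qp (x : K) : Prop :=
  forall e : R, 0 < e -> exists r : rat, abs (x - ratr r) < e.

(* closure of N in K : this is Z_p *)
Definition in_Zp (x : K) : Prop :=
  forall e : R, 0 < e -> exists n : nat, abs (x - n%:R) < e.

Definition algebraic_over_Qp (z : K) : Prop :=
  exists q : {poly K}, [/\ q != 0, (forall i, in_Qp q`_i) & root q z].

Definition cauchy_seq (u : nat -> K) : Prop :=
  forall e : R, 0 < e -> exists N : nat,
    forall m n, (N <= m)%N -> (N <= n)%N -> abs (u m - u n) < e.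

Definition seq_cvg_to (u : nat -> K) (l : K) : Prop :=
  forall e : R, 0 < e -> exists N : nat, forall n, (N <= n)%N -> abs (u n - l) < e.

Record is_Cp (p : nat) : Prop := {
  abs_ge0 : forall x, 0 <= abs x;
  abs_eq0 : forall x, abs x = 0 <-> x = 0;
  absM : forall x y, abs (x * y) = abs x * abs y;
  abs_ultra : forall x y, abs (x + y) <= Num.max (abs x) (abs y);
  abs_p : abs (p%:R) = (p%:R)^-1;
  complete : forall u, cauchy_seq u -> exists l, seq_cvg_to u l;
  alg_closed : GRing.closed_field_axiom K;
  algQp_dense : forall x (e : R), 0 < e ->
    exists z, algebraic_over_Qp z /\ abs (x - z) < e
}.

(* sum of a convergent series (value 0 if it does not converge) *)
Definition has_sum (a : nat -> K) (s : K) : Prop :=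
  seq_cvg_to (fun n => \sum_(k < n) a k) s.

Definition sumK (a : nat -> K) : K := epsilon (inhabits 0) (has_sum a).

(* continuity on Z_p ; functions are represented as maps K -> K, only their
   values on Z_p matter *)
Definition cont_Zp (phi : K -> K) : Prop :=
  forall x, in_Zp x -> forall e : R, 0 < e -> exists2 d : R, 0 < d &
    forall z, in_Zp z -> abs (z - x) < d -> abs (phi z - phi x) < e.

Definition binom (x : K) (n : nat) : K :=
  (\prod_(i < n) (x - i%:R)) / (n`!)%:R.

Definition nabla (phi : K -> K) : K -> K := fun x => phi (x + 1) - phi x.
Definition sigma (phi : K -> K) : K -> K := fun x => phi (x + 1).

Definition mahler_fun (c : nat -> K) : K -> K :=
  fun x => sumK (fun n => c n * binom x n).

Definition conv (phi psi : K -> K) : K -> K :=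
  mahler_fun (fun n => \sum_(k < n.+1)
     'C(n, k)%:R * iter k nabla phi 0 * iter (n - k) nabla psi 0).

Definition Sop (y : K) (phi : K -> K) : K -> K :=
  fun x => sumK (fun k => (-1) ^+ k * (k`!)%:R * binom y k * binom x k
                          * phi (x - k%:R)).

Definition Top (x : K) (phi : K -> K) : K -> K := fun y => Sop y phi x.

Definition one_fun : K -> K := fun _ => 1.

Definition omx_pow (y : K) : K -> K := Sop y one_fun.

Definition xm1_pow (n : int) : K -> K :=
  fun x => (-1) ^ n * Sop (n%:~R) one_fun x.

(* the element sum_{n <= N} a_n (x - 1)^{*n} of A *)
Definition Afun (a : int -> K) (N : int) : K -> K :=
  fun x => sumK (fun m : nat => a (N - m%:Z) * xm1_pow (N - m%:Z) x).

Definition decays_at_minfty (a : int -> K) : Prop :=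
  forall e : R, 0 < e -> exists M : int, forall n, n <= M -> abs (a n) < e.

(* coefficients of D(psi): D(sum_{n<=N} a_n X^n) = sum_{m<=N-1} (m+1) a_{m+1} X^m *)
Definition Dcoef (a : int -> K) : int -> K := fun m => (m + 1)%:~R * a (m + 1).

End Cp.

(* Main.v *)
Require Import Defs.
From HB Require Import structures.
From mathcomp Require Import all_boot all_order all_algebra.
From mathcomp Require Import reals.
From mathcomp Require Import ring lra zify.
From Stdlib Require Import ClassicalEpsilon Classical.
From mathcomp Require boolp.
Import Order.TTheory GRing.Theory Num.Theory.
Set Implicit Arguments. Unset Strict Implicit. Unset Printing Implicit Defensive.
Local Open Scope ring_scope.

Section Basic.
Variables (p : nat) (R : realType) (K : fieldType) (abs : K -> R).
Hypothesis hp : prime p.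
Hypothesis hC : is_Cp abs p.
Implicit Types (x y z : K).

Lemma abs_ge0' x : 0 <= abs x. Proof. exact: (Defs.abs_ge0 hC x). Qed.
Lemma abs0 : abs 0 = 0. Proof. by apply/(Defs.abs_eq0 hC). Qed.
Lemma abs_pos x : x != 0 -> 0 < abs x.
Proof.
move=> hx; rewrite lt_neqAle abs_ge0' andbT eq_sym; apply/eqP => /(Defs.abs_eq0 hC) h.
by rewrite h eqxx in hx.
Qed.
Lemma abs1 : abs 1 = 1.
Proof.
have h := absM hC 1 1; rewrite mulr1 in h.
have h1 : abs 1 != 0 by rewrite gt_eqF // abs_pos // oner_eq0.
by apply/(mulIf h1); rewrite mul1r -h.
Qed.
Lemma absN1 : abs (-1) = 1.
Proof.
have h := absM hC (-1) (-1); rewrite mulrNN mulr1 abs1 in h.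
have h0 := abs_ge0' (-1); nra.
Qed.
Lemma absN x : abs (- x) = abs x.
Proof. by rewrite -mulN1r (absM hC) absN1 mul1r. Qed.
Lemma absB x y : abs (x - y) = abs (y - x).
Proof. by rewrite -absN opprB. Qed.
Lemma ultra x y B : abs x <= B -> abs y <= B -> abs (x + y) <= B.
Proof.
move=> hx hy; apply: le_trans (abs_ultra hC x y) _.
by rewrite ge_max hx hy.
Qed.
Lemma ultraB x y B : abs x <= B -> abs y <= B -> abs (x - y) <= B.
Proof. by move=> hx hy; apply: ultra => //; rewrite absN. Qed.
Lemma ultra_lt x y B : abs x < B -> abs y < B -> abs (x + y) < B.
Proof.
move=> hx hy; apply: le_lt_trans (abs_ultra hC x y) _.
by rewrite gt_max hx hy.
Qed.
Lemma ultraB_lt x y B : abs x < B -> abs y < B -> abs (x - y) < B.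
Proof. by move=> hx hy; apply: ultra_lt => //; rewrite absN. Qed.
Lemma ultra_sum (I : Type) (r : seq I) (P : pred I) (F : I -> K) B :
  0 <= B -> (forall i, P i -> abs (F i) <= B) -> abs (\sum_(i <- r | P i) F i) <= B.
Proof.
move=> hB hF; apply: (big_ind (fun x => abs x <= B)) => //.
  by rewrite abs0.
by move=> x y; apply: ultra.
Qed.
Lemma ultra_sum_lt (I : Type) (r : seq I) (P : pred I) (F : I -> K) B :
  0 < B -> (forall i, P i -> abs (F i) < B) -> abs (\sum_(i <- r | P i) F i) < B.
Proof.
move=> hB hF; apply: (big_ind (fun x => abs x < B)) => //.
  by rewrite abs0.
by move=> x y; apply: ultra_lt.
Qed.
Lemma abs_nat n : abs (n%:R) <= 1.
Proof.
elim: n => [|n IH]; first by rewrite abs0 ler01.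
by rewrite mulrSr; apply: ultra => //; rewrite abs1.
Qed.
Lemma abs_int (z : int) : abs (z%:~R) <= 1.
Proof. by case: z => n; rewrite ?NegzE ?mulrNz ?absN abs_nat. Qed.
Lemma abs_p : abs (p%:R) = (p%:R)^-1. Proof. exact: (abs_p hC). Qed.
Lemma p_gt1 : (1 < p)%N. Proof. exact: prime_gt1. Qed.
Lemma abs_p_lt1 : abs (p%:R) < 1.
Proof.
rewrite abs_p invf_lt1 ?ltr1n ?p_gt1 //.
by rewrite ltr0n (ltn_trans _ p_gt1).
Qed.
Lemma abs_p_gt0 : 0 < abs (p%:R).
Proof. by rewrite abs_p invr_gt0 ltr0n (ltn_trans _ p_gt1). Qed.
Lemma absV x : abs (x^-1) = (abs x)^-1.
Proof.
have [->|hx] := eqVneq x 0; first by rewrite invr0 abs0 invr0.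
have h := absM hC x x^-1; rewrite mulfV // abs1 in h.
have hx' : abs x != 0 by rewrite gt_eqF // abs_pos.
by apply/(mulfI hx'); rewrite -h mulfV.
Qed.
Lemma absX x n : abs (x ^+ n) = abs x ^+ n.
Proof. by elim: n => [|n IH]; rewrite ?expr0 ?abs1 // !exprS (absM hC) IH. Qed.

Lemma char0 n : (0 < n)%N -> n%:R != 0 :> K.
Proof.
elim/ltn_ind: n => n IH hn.
have [hd|hnd] := boolP (p %| n)%N.
  have [m hm] : exists m, n = (m * p)%N by exists (n %/ p)%N; rewrite divnK.
  have hm0 : (0 < m)%N by move: hn; rewrite hm muln_gt0 => /andP[].
  have hlt : (m < n)%N.
    by rewrite hm -{1}[m]muln1 ltn_mul2l hm0 p_gt1.
  rewrite hm natrM mulf_neq0 //; first exact: IH.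
  by apply/eqP => h0; have := abs_p_gt0; rewrite h0 abs0 ltxx.
have hco : gcdn n p = 1%N.
  by apply/eqP; rewrite gcdnC -/(coprime p n) prime_coprime.
case: (egcdnP p hn) => km kn hk _.
rewrite hco in hk.
apply/negP => /eqP h0.
have : (km * n)%:R = (kn * p + 1)%:R :> K by rewrite hk.
rewrite natrM h0 mulr0 natrD natrM => /eqP; rewrite eq_sym addr_eq0 => /eqP h1.
have := abs1; rewrite -absN1 -h1 (absM hC) => h2.
have h3 := abs_nat kn; have h4 := abs_p_lt1; have h5 := abs_ge0' (p%:R).
have h6 := abs_ge0' (kn%:R).
have : abs kn%:R * abs p%:R < 1.
  by apply: le_lt_trans (ler_wpM2r h5 h3) _; rewrite mul1r.
by rewrite -h2 abs1 ltxx.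
Qed.

Lemma fact_neq0 k : (k`!)%:R != 0 :> K.
Proof. by rewrite char0 // fact_gt0. Qed.


Definition tz (u : nat -> K) := forall e : R, 0 < e -> exists N, forall n, (N <= n)%N -> abs (u n) < e.

Lemma has_sum_unique a s t : has_sum abs a s -> has_sum abs a t -> s = t.
Proof.
move=> hs ht; apply/eqP; rewrite -subr_eq0; apply/eqP/(Defs.abs_eq0 hC).
apply/eqP; rewrite eq_le abs_ge0' andbT; rewrite leNgt; apply/negP => he.
have [N1 h1] := hs _ he; have [N2 h2] := ht _ he.
have := ultraB_lt (h2 (N1 + N2)%N (leq_addl _ _)) (h1 (N1 + N2)%N (leq_addr _ _)).
by rewrite opprB addrC addrA subrK ltxx.
Qed.

Lemma sumK_eq a s : has_sum abs a s -> sumK abs a = s.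
Proof.
move=> hs; apply: (has_sum_unique _ hs).
by apply: (epsilon_spec (inhabits 0) (has_sum abs a)); exists s.
Qed.

Lemma has_sum_ext a b s : (forall n, a n = b n) -> has_sum abs a s -> has_sum abs b s.
Proof.
move=> hab hs e he; have [N hN] := hs e he; exists N => n hn /=.
by rewrite (eq_bigr (fun i : 'I_n => a i)) => [|i _]; [apply: hN | rewrite hab].
Qed.

Lemma has_sumD a b s t : has_sum abs a s -> has_sum abs b t ->
  has_sum abs (fun n => a n + b n) (s + t).
Proof.
move=> hs ht e he; have [N1 h1] := hs e he; have [N2 h2] := ht e he.
exists (N1 + N2)%N => n hn /=; rewrite big_split /=.
have -> : \sum_(i < n) a i + \sum_(i < n) b i - (s + t)
   = (\sum_(i < n) a i - s) + (\sum_(i < n) b i - t) by rewrite opprD addrACA.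
by apply: ultra_lt; [apply: h1 | apply: h2]; apply: leq_trans hn; rewrite ?leq_addr ?leq_addl.
Qed.

Lemma has_sumZ c a s : has_sum abs a s -> has_sum abs (fun n => c * a n) (c * s).
Proof.
move=> hs e he.
have [->|hc] := eqVneq c 0.
  by exists 0%N => n _; rewrite big1 ?mul0r ?subr0 ?abs0 // => i _; rewrite mul0r.
have hca : 0 < abs c by rewrite abs_pos.
have [N hN] := hs (e / abs c) (divr_gt0 he hca).
exists N => n hn /=; rewrite -mulr_sumr -mulrBr (absM hC).
by rewrite mulrC -ltr_pdivlMr //; apply: hN.
Qed.

Lemma has_sum_fin a M : (forall n, (M <= n)%N -> a n = 0) -> has_sum abs a (\sum_(k < M) a k).
Proof.
move=> h0 e he; exists M => n hn /=.
rewrite -!(big_mkord xpredT) (big_cat_nat (leq0n M) hn) /=.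
rewrite addrAC subrr add0r big_nat_cond big1 ?abs0 //.
by move=> i /andP[/andP[hi _] _]; apply: h0.
Qed.

Lemma has_sum_shift a s : has_sum abs a s -> has_sum abs (fun n => a n.+1) (s - a 0%N).
Proof.
move=> hs e he; have [N hN] := hs e he; exists N => n hn /=.
have := hN n.+1 (leqW hn); rewrite big_ord_recl /=.
suff -> : (\sum_(i < n) a i.+1 - (s - a 0%N)) = (a 0%N + \sum_(i < n) a i.+1 - s) by [].
by rewrite opprB addrCA addrA.
Qed.

Lemma has_sum_unshift a s : has_sum abs (fun n => a n.+1) s -> has_sum abs a (a 0%N + s).
Proof.
move=> hs e he; have [N hN] := hs e he; exists N.+1 => n hn /=.
case: n hn => [//|n] hn; rewrite big_ord_recl /=.
by rewrite opprD addrACA subrr add0r; apply: hN.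
Qed.

Lemma tz_has_sum a : tz a -> exists s, has_sum abs a s.
Proof.
move=> ha; apply: (complete hC) => e he.
have [N hN] := ha e he; exists N.
have key : forall m n, (N <= n)%N -> (n <= m)%N ->
    abs (\sum_(k < m) a k - \sum_(k < n) a k) < e.
  move=> m n hn hnm; rewrite -!(big_mkord xpredT) (big_cat_nat (leq0n n) hnm) /=.
  rewrite addrAC subrr add0r big_nat_cond; apply: ultra_sum_lt => // i /andP[/andP[hi _] _].
  by apply: hN; apply: leq_trans hi.
move=> m n hm hn; have [hnm|hmn] := leqP n m; first exact: key.
by rewrite absB; apply: key => //; apply: ltnW.
Qed.

Lemma has_sum_bound a s B : (forall n, abs (a n) <= B) -> has_sum abs a s -> abs s <= B.
Proof.
move=> hB hs; have hB0 : 0 <= B by apply: le_trans (hB 0%N); apply: abs_ge0'.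
rewrite leNgt; apply/negP => hsB.
have he : 0 < abs s - B by rewrite subr_gt0.
have [N hN] := hs _ he; have h1 := hN N (leqnn N).
have h2 : abs (\sum_(k < N) a k) <= B by apply: ultra_sum.
have := abs_ultra hC (s - \sum_(k < N) a k) (\sum_(k < N) a k).
rewrite subrK le_max absB => /orP[] h3; lra.
Qed.

Lemma tz_bounded u : tz u -> exists M, 0 < M /\ forall n, abs (u n) <= M.
Proof.
move=> hu; have [N hN] := hu 1 ltr01.
exists (1 + \sum_(k < N) abs (u k)); split.
  by apply: lt_le_trans (ltr01) _; rewrite lerDl sumr_ge0 // => i _; apply: abs_ge0'.
move=> n; have [hn|hn] := leqP N n.
  by apply: le_trans (ltW (hN n hn)) _; rewrite lerDl sumr_ge0 // => i _; apply: abs_ge0'.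
have h1 : abs (u n) <= \sum_(k < N) abs (u k).
  by rewrite (bigD1 (Ordinal hn)) //= lerDl sumr_ge0 // => i _; apply: abs_ge0'.
by apply: le_trans h1 _; rewrite lerDr.
Qed.

Lemma tz_le u v : tz u -> (forall n, abs (v n) <= abs (u n)) -> tz v.
Proof.
move=> hu hvu e he; have [N hN] := hu e he; exists N => n hn /=.
by apply: le_lt_trans (hvu n) (hN n hn).
Qed.

Lemma tz_mulr u v B : tz u -> (forall n, abs (v n) <= B) -> tz (fun n => u n * v n).
Proof.
move=> hu hv e he.
have hB : 0 < B + 1 by apply: lt_le_trans ltr01 _; rewrite lerDr; apply: le_trans (hv 0%N); apply: abs_ge0'.
have [N hN] := hu (e / (B + 1)) (divr_gt0 he hB); exists N => n hn /=.
rewrite (absM hC); have h1 := hN n hn; have h2 := hv n.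
have h3 := abs_ge0' (u n); have h4 := abs_ge0' (v n).
rewrite ltr_pdivlMr // in h1.
apply: le_lt_trans (ler_wpM2l h3 h2) _.
apply: le_lt_trans _ h1; apply: ler_wpM2l => //; lra.
Qed.

Lemma has_sum_big m (F : nat -> nat -> K) (S : nat -> K) :
  (forall i, (i < m)%N -> has_sum abs (F i) (S i)) ->
  has_sum abs (fun n => \sum_(i < m) F i n) (\sum_(i < m) S i).
Proof.
elim: m => [|m IH] hF.
  have := has_sum_fin (a := fun _ => (0:K)) (M := 0%N) (fun _ _ => erefl).
  rewrite !big_ord0 => h; apply: has_sum_ext h => n.
  by rewrite big_ord0.
rewrite big_ord_recr /=.
apply: has_sum_ext (has_sumD (IH _) (hF m _)) => //.
  by move=> n; rewrite big_ord_recr.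
by move=> i hi; apply: hF; apply: ltnW.
Qed.


Definition Pf (x : K) (k : nat) : K := \prod_(i < k) (x - (i : nat)%:R).

Lemma binomE x k : binom x k = Pf x k / (k`!)%:R.
Proof. by []. Qed.

Lemma binom0 x : binom x 0 = 1.
Proof. by rewrite /binom big_ord0 fact0 divr1. Qed.

Lemma Pf_recl x k : Pf x k.+1 = x * Pf (x - 1) k.
Proof.
rewrite /Pf big_ord_recl /= subr0; congr (_ * _); apply: eq_bigr => i _.
by rewrite mulrSr opprD addrA addrAC.
Qed.

Lemma Pf_recr x k : Pf x k.+1 = Pf x k * (x - k%:R).
Proof. by rewrite /Pf big_ord_recr. Qed.

Lemma binomS x k : binom (x + 1) k.+1 = binom x k.+1 + binom x k.
Proof.
rewrite !binomE Pf_recl addrK Pf_recr factS natrM.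
have h1 := fact_neq0 k; have h2 : (k.+1)%:R != 0 :> K by rewrite char0.
by field; rewrite h1 addrC -mulrSr h2.
Qed.

Lemma binom_absorb x k : binom x k.+1 * (k.+1)%:R = x * binom (x - 1) k.
Proof.
rewrite !binomE Pf_recl factS natrM.
have h1 := fact_neq0 k; have h2 : (k.+1)%:R != 0 :> K by rewrite char0.
by field; rewrite h1 addrC -mulrSr h2.
Qed.

Lemma binom_0S k : binom (0 : K) k.+1 = 0.
Proof. by rewrite binomE Pf_recl mul0r mul0r. Qed.

Lemma binom_nat n k : binom (n%:R : K) k = 'C(n, k)%:R.
Proof.
elim: n k => [|n IH] [|k]; rewrite ?binom0 ?bin0 //.
  by rewrite binom_0S bin0n.
by rewrite mulrSr binomS !IH binS natrD.
Qed.

Lemma prod_le1 k (F : 'I_k -> K) : (forall i, abs (F i) <= 1) -> abs (\prod_i F i) <= 1.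
Proof.
move=> hF; apply: (big_ind (fun x => abs x <= 1)); first by rewrite abs1.
  move=> x y hx hy; rewrite (absM hC).
  by apply: le_trans (ler_wpM2l (abs_ge0' x) hy) _; rewrite mulr1.
by move=> i _; apply: hF.
Qed.

Lemma prod_diff k (F G : nat -> K) B : 0 <= B ->
  (forall i, abs (F i) <= 1) -> (forall i, abs (G i) <= 1) ->
  (forall i, abs (F i - G i) <= B) ->
  abs (\prod_(i < k) F i - \prod_(i < k) G i) <= B.
Proof.
move=> hB hF hG hFG; elim: k => [|k IH]; first by rewrite !big_ord0 subrr abs0.
rewrite !big_ord_recr /=.
have -> : \prod_(i < k) F i * F k - \prod_(i < k) G i * G k
   = \prod_(i < k) F i * (F k - G k) + (\prod_(i < k) F i - \prod_(i < k) G i) * G k.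
  by rewrite mulrBr mulrBl addrA subrK.
apply: ultra; rewrite (absM hC).
  have h1 : abs (\prod_(i < k) F i) <= 1 by apply: prod_le1.
  apply: le_trans (ler_wpM2r (abs_ge0' _) h1) _; rewrite mul1r; exact: hFG.
by apply: le_trans (ler_wpM2l (abs_ge0' _) (hG k)) _; rewrite mulr1.
Qed.

Lemma pow_small e : 0 < e -> exists t, abs (p%:R) ^+ t < e.
Proof.
move=> he; set t := Num.Def.archi_bound (e^-1).
have ht : e^-1 < t%:R by apply: archi_boundP; rewrite invr_ge0 ltW.
exists t; rewrite abs_p exprVn -natrX.
have hpt : (t < p ^ t)%N by apply: ltn_expl; exact: p_gt1.
have hpt' : t%:R < (p ^ t)%:R :> R by rewrite ltr_nat.
have h0 : 0 < (p ^ t)%:R :> R by rewrite ltr0n expn_gt0 (ltn_trans _ p_gt1).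
rewrite invf_plt ?posrE //.
by apply: lt_trans hpt'.
Qed.

Lemma in_Zp_nat n : in_Zp abs (n%:R).
Proof. by move=> e he; exists n; rewrite subrr abs0. Qed.

Lemma Zp_le1 x : in_Zp abs x -> abs x <= 1.
Proof.
move=> hx; have [n hn] := hx 1 ltr01.
have -> : x = (x - n%:R) + n%:R by rewrite subrK.
by apply: ultra; [apply: ltW | apply: abs_nat].
Qed.

Lemma in_Zp_add1 x : in_Zp abs x -> in_Zp abs (x + 1).
Proof.
move=> hx e he; have [n hn] := hx e he; exists n.+1.
by rewrite mulrSr opprD addrACA subrr addr0.
Qed.

Lemma in_Zp_sub1 x : in_Zp abs x -> in_Zp abs (x - 1).
Proof.
move=> hx e he; have [n hn] := hx e he; have [t ht] := pow_small he.
exists (n + (p ^ t).-1)%N.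
have hpt : (0 < p ^ t)%N by rewrite expn_gt0 (ltn_trans _ p_gt1).
have -> : x - 1 - (n + (p ^ t).-1)%:R = (x - n%:R) - (p%:R ^+ t).
  by rewrite -natrX -{2}(prednK hpt) mulrSr natrD; ring.
by apply: ultraB_lt => //; rewrite absX.
Qed.

Lemma in_Zp_subn x n : in_Zp abs x -> in_Zp abs (x - n%:R).
Proof.
move=> hx; elim: n => [|n IH]; first by rewrite subr0.
by rewrite mulrSr opprD addrA; apply: in_Zp_sub1.
Qed.

Lemma in_Zp_addn x n : in_Zp abs x -> in_Zp abs (x + n%:R).
Proof.
move=> hx; elim: n => [|n IH]; first by rewrite addr0.
by rewrite mulrSr addrA; apply: in_Zp_add1.
Qed.

Lemma binom_le1 x k : in_Zp abs x -> abs (binom x k) <= 1.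
Proof.
move=> hx; have hf := fact_neq0 k; have hfa : 0 < abs ((k`!)%:R) by rewrite abs_pos.
have [n hn] := hx _ hfa.
have -> : binom x k = binom n%:R k + (Pf x k - Pf n%:R k) / (k`!)%:R.
  by rewrite !binomE mulrBl addrC subrK.
apply: ultra; first by rewrite binom_nat abs_nat.
rewrite (absM hC) absV ler_pdivrMr // mul1r; apply: ltW.
apply: le_lt_trans hn.
rewrite /Pf; apply: (@prod_diff k (fun i => x - i%:R) (fun i => n%:R - i%:R)) => [|i|i|i]; rewrite ?abs_ge0' //.
- by apply: ultraB; [apply: Zp_le1 | apply: abs_nat].
- by apply: ultraB; apply: abs_nat.
- by rewrite opprB addrA subrK le_refl.
Qed.

Lemma abs_fact_mono m n : (m <= n)%N -> abs ((n`!)%:R) <= abs ((m`!)%:R).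
Proof.
move=> /subnK <-; elim: (n - m)%N => [|d IH]; first by rewrite add0n.
rewrite addSn factS natrM (absM hC); apply: le_trans IH.
by apply: le_trans (ler_wpM2r (abs_ge0' _) (abs_nat _)) _; rewrite mul1r.
Qed.

Lemma abs_fact_p m : abs (((m * p)`!)%:R) <= abs (p%:R) ^+ m.
Proof.
elim: m => [|m IH]; first by rewrite mul0n fact0 abs1 expr0.
have hp0 : (0 < p)%N by apply: ltn_trans p_gt1.
have -> : (m.+1 * p = (m * p + p.-1).+1)%N by rewrite mulSn; lia.
rewrite factS -addnS prednK // natrM (absM hC) exprS.
have h1 : abs ((m * p + p)%:R) <= abs (p%:R).
  rewrite -mulSnr natrM (absM hC) mulrC.
  by apply: le_trans (ler_wpM2l (abs_ge0' _) (abs_nat _)) _; rewrite mulr1.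
have h2 : abs (((m * p + p.-1)`!)%:R) <= abs (p%:R) ^+ m.
  by apply: le_trans IH; apply: abs_fact_mono; apply: leq_addr.
apply: le_trans (ler_wpM2r (abs_ge0' _) h1) _.
by apply: ler_wpM2l; [apply: abs_ge0' | ].
Qed.

Lemma tz_fact : tz (fun k => (k`!)%:R).
Proof.
move=> e he; have [t ht] := pow_small he; exists (t * p)%N => n hn.
by apply: le_lt_trans (abs_fact_mono hn) _; apply: le_lt_trans (abs_fact_p t) _.
Qed.


Lemma nablaE n (f : K -> K) x : iter n (@nabla K) f x =
  \sum_(i < n.+1) (-1) ^+ (n - i) * ('C(n, i))%:R * f (x + i%:R).
Proof.
elim: n x => [|n IH] x.
  by rewrite big_ord1 /= expr0 !mul1r addr0.
rewrite iterS /nabla !IH.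
rewrite [in RHS]big_ord_recl /= subn0 bin0 mulr1n mulr1 addr0.
have E : forall i : 'I_n.+1, (-1) ^+ (n.+1 - bump 0 i) * ('C(n.+1, bump 0 i))%:R * f (x + (bump 0 i)%:R)
   = (-1) ^+ (n - i) * ('C(n, i))%:R * f (x + 1 + i%:R) + (-1) ^+ (n - i) * ('C(n, i.+1))%:R * f (x + (i.+1)%:R).
  move=> i; rewrite /bump /= add1n subSS binS natrD.
  by rewrite -addrA [1 + _]addrC -mulrSr; ring.
rewrite (eq_bigr _ (fun i _ => E i)) big_split /=.
rewrite [X in _ - X]big_ord_recl [X in _ = _ + (_ + X)]big_ord_recr /= subn0 bin0 mulr1n mulr1 addr0.
rewrite bin_small // mulr0 mul0r addr0.
have E2 : forall i : 'I_n, (-1) ^+ (n - i) * ('C(n, i.+1))%:R * f (x + (i.+1)%:R)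
   = - ((-1) ^+ (n - bump 0 i) * ('C(n, bump 0 i))%:R * f (x + (bump 0 i)%:R)).
  move=> i; rewrite /bump /= add1n.
  have hi : (n - i = (n - i.+1).+1)%N by have := ltn_ord i; lia.
  by rewrite hi exprS; ring.
rewrite (eq_bigr _ (fun i _ => E2 i)) sumrN exprS.
ring.
Qed.

Lemma p_dvd_binpow s i : (0 < i < p ^ s)%N -> (p %| 'C(p ^ s, i))%N.
Proof.
case: i => [//|j] /andP[_ hj].
apply/negPn/negP => hnd.
have hco : coprime (p ^ s) 'C(p ^ s, j.+1) by rewrite coprimeXl // prime_coprime.
have h := mul_bin_diag (p ^ s) j.
have : (p ^ s %| j.+1 * 'C(p ^ s, j.+1))%N by rewrite -h dvdn_mulr.
rewrite Gauss_dvdl // => /dvdn_leq => /(_ isT) hle.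
by move: hj; rewrite ltnNge hle.
Qed.

Lemma abs_sign k : abs ((-1) ^+ k) = 1.
Proof. by rewrite absX absN1 expr1n. Qed.

Definition cN (N i : nat) : K :=
  (-1) ^+ (N - i) * ('C(N, i))%:R - (i == N)%:R + (i == 0%N)%:R.

Lemma abs_cN s i : (i <= p ^ s)%N -> abs (cN (p ^ s) i) <= abs (p%:R).
Proof.
move=> hi; rewrite /cN; set N := (p ^ s)%N.
have hN : (0 < N)%N by rewrite expn_gt0 (ltn_trans _ p_gt1).
have [->|hiN] := eqVneq i N.
  rewrite subnn expr0 binn mul1r eqn0Ngt hN /= subrr add0r.
  by rewrite abs0 abs_ge0'.
have [->|hi0] := eqVneq i 0%N.
  rewrite subn0 bin0 mulr1n mulr1 /= subr0 -signr_odd.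
  case: (boolP (odd N)) => hodd; first by rewrite expr1 addNr abs0 abs_ge0'.
  have h2 : (2 %| p)%N.
    have : (2 %| N)%N by rewrite dvdn2.
    by rewrite Euclid_dvdX // => /andP[].
  have -> : p = 2%N by apply/eqP; rewrite eq_sym -(dvdn_prime2 (isT : prime 2) hp).
  by rewrite expr0.
have hlt : (0 < i < N)%N by rewrite lt0n hi0 ltn_neqAle hiN hi.
have [m hm] := dvdnP (p_dvd_binpow hlt).
rewrite /= subr0 addr0 hm natrM (absM hC) (absM hC) abs_sign mul1r.
by apply: le_trans (ler_wpM2r (abs_ge0' _) (abs_nat m)) _; rewrite mul1r.
Qed.

Lemma nabla_pow_split g x N : iter N (@nabla K) g x - (g (x + N%:R) - g x)
  = \sum_(i < N.+1) cN N i * g (x + i%:R).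
Proof.
rewrite nablaE /cN.
have E : forall i : 'I_N.+1, (((-1) ^+ (N - i) * ('C(N, i))%:R - ((i : nat) == N)%:R + ((i : nat) == 0%N)%:R) * g (x + i%:R))
  = (-1) ^+ (N - i) * ('C(N, i))%:R * g (x + i%:R) - (((i : nat) == N)%:R * g (x + i%:R)) + (((i : nat) == 0%N)%:R * g (x + i%:R)).
  by move=> i; ring.
rewrite (eq_bigr _ (fun i _ => E i)) !big_split /= sumrN.
have -> : \sum_(i < N.+1) ((i : nat) == N)%:R * g (x + i%:R) = g (x + N%:R).
  rewrite big_ord_recr /= eqxx mul1r big1 ?add0r // => i _.
  by rewrite (ltn_eqF (ltn_ord i)) mul0r.
have -> : \sum_(i < N.+1) ((i : nat) == 0%N)%:R * g (x + i%:R) = g x.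
  by rewrite big_ord_recl /= mul1r addr0 big1 ?addr0 // => i _; rewrite mul0r.
by ring.
Qed.

Lemma nabla_pow_bound g (e B : R) s : 0 <= e -> 0 <= B ->
  (forall j, abs (g j%:R) <= B) ->
  (forall j, abs (g ((j + p ^ s)%:R) - g (j%:R)) <= e) ->
  forall j, abs (iter (p ^ s) (@nabla K) g j%:R) <= Num.max e (abs (p%:R) * B).
Proof.
move=> he hB hg hsh j.
have := nabla_pow_split g (j%:R) (p ^ s).
move/eqP; rewrite subr_eq => /eqP ->.
apply: ultra.
  apply: ultra_sum.
    by rewrite le_max; apply/orP; left.
  move=> i _; rewrite (absM hC) le_max; apply/orP; right.
  apply: le_trans (ler_wpM2r (abs_ge0' _) (abs_cN _)) _; first by rewrite -ltnS.
  by apply: ler_wpM2l; [apply: abs_ge0' | rewrite -natrD; apply: hg].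
by rewrite le_max -natrD hsh.
Qed.

Lemma iter_nabla_nat_bound g (B : R) k : 0 <= B -> (forall j, abs (g j%:R) <= B) ->
  forall j, abs (iter k (@nabla K) g j%:R) <= B.
Proof.
move=> hB hg; elim: k => [|k IH] j //=.
by rewrite /nabla -mulrSr; apply: ultraB.
Qed.

Lemma iter_nabla_shift g (e : R) L k : 0 <= e ->
  (forall j, abs (g ((j + L)%:R) - g j%:R) <= e) ->
  forall j, abs (iter k (@nabla K) g ((j + L)%:R) - iter k (@nabla K) g j%:R) <= e.
Proof.
move=> he hg; elim: k => [|k IH] j //=.
rewrite /nabla -!mulrSr -addSn.
set h := iter k _ g.
have -> : h (j.+1 + L)%:R - h (j + L)%:R - (h j.+1%:R - h j%:R)
   = (h (j.+1 + L)%:R - h j.+1%:R) - (h (j + L)%:R - h j%:R) by ring.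
by apply: ultraB.
Qed.

Definition bad (phi : K -> K) (e : R) (t a : nat) : Prop :=
  forall S, exists s q, (S <= s)%N /\
    e <= abs (phi ((a + q * p ^ t + p ^ s)%:R) - phi ((a + q * p ^ t)%:R)).

Lemma finite_bound (Q : nat -> nat -> Prop) n :
  (forall i S S', (S <= S')%N -> Q i S -> Q i S') ->
  (forall i, (i < n)%N -> exists S, Q i S) -> exists S, forall i, (i < n)%N -> Q i S.
Proof.
move=> hmono; elim: n => [|n IH] h; first by exists 0%N.
have [S1 h1] := IH (fun i hi => h i (leqW hi)).
have [S2 h2] := h n (ltnSn n).
exists (maxn S1 S2) => i; rewrite ltnS leq_eqVlt => /orP[/eqP ->|hi].
  by apply: hmono h2; apply: leq_maxr.
by apply: hmono (h1 i hi); apply: leq_maxl.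
Qed.

Lemma bad_step phi e t a : bad phi e t a -> exists i, (i < p)%N /\ bad phi e t.+1 (a + i * p ^ t).
Proof.
move=> hb; apply: NNPP => hne.
pose Q i S := forall s q, (S <= s)%N ->
  abs (phi ((a + i * p ^ t + q * p ^ t.+1 + p ^ s)%:R) - phi ((a + i * p ^ t + q * p ^ t.+1)%:R)) < e.
have hall : forall i, (i < p)%N -> exists S, Q i S.
  move=> i hi; apply: NNPP => hS; apply: hne; exists i; split => // S.
  apply: NNPP => hS2; apply: hS; exists S => s q hs; rewrite ltNge; apply/negP => hle.
  by apply: hS2; exists s, q.
have [S hS] : exists S, forall i, (i < p)%N -> Q i S.
  apply: finite_bound hall => i S S' hSS' hQ s q hs; apply: hQ; apply: leq_trans hSS' hs.
have [s [q [hs hle]]] := hb S.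
have hi : (q %% p < p)%N by rewrite ltn_mod (ltn_trans _ p_gt1).
have := hS _ hi s (q %/ p)%N hs.
have -> : (a + q %% p * p ^ t + q %/ p * p ^ t.+1 = a + q * p ^ t)%N.
  have hq := divn_eq q p; rewrite expnS.
  move: (q %% p)%N (q %/ p)%N (p ^ t)%N hq => r d X ->; nia.
by rewrite ltNge hle.
Qed.

Fixpoint seqa (G : nat -> nat -> nat) (t : nat) : nat :=
  if t is t'.+1 then (seqa G t' + G t' (seqa G t') * p ^ t')%N else 0%N.

Lemma seqa_mod G m n : (n <= m)%N -> exists c, seqa G m = (seqa G n + c * p ^ n)%N.
Proof.
move=> /subnK <-; elim: (m - n)%N => [|d [c hc]]; first by exists 0%N; rewrite add0n mul0n addn0.
exists (c + G (d + n)%N (seqa G (d + n)) * p ^ d)%N.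
by rewrite addSn /= hc expnD mulnDl mulnA addnA.
Qed.

Lemma abs_natmulp c t : abs ((c * p ^ t)%:R) <= abs (p%:R) ^+ t.
Proof.
rewrite natrM natrX (absM hC) absX.
by apply: le_trans (ler_wpM2r (exprn_ge0 _ (abs_ge0' _)) (abs_nat c)) _; rewrite mul1r.
Qed.

Lemma pow_mono m n : (m <= n)%N -> abs (p%:R) ^+ n <= abs (p%:R) ^+ m.
Proof. by move=> h; apply: ler_wiXn2l => //; [apply: abs_ge0' | apply: ltW; apply: abs_p_lt1]. Qed.

Lemma near_nat a c t z (d : R) : abs (a%:R - z) < d -> abs (p%:R) ^+ t < d ->
  abs ((a + c * p ^ t)%:R - z) < d.
Proof.
move=> h1 h2; rewrite natrD addrAC; apply: ultra_lt => //.
by apply: le_lt_trans (abs_natmulp c t) _.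
Qed.

Lemma unif_shift phi : cont_Zp abs phi -> forall e : R, 0 < e ->
  exists s, forall j, abs (phi ((j + p ^ s)%:R) - phi (j%:R)) < e.
Proof.
move=> hphi e he; apply: NNPP => hne.
have hb0 : bad phi e 0 0.
  move=> S; apply: NNPP => hS; apply: hne; exists S => j; rewrite ltNge; apply/negP => hle.
  by apply: hS; exists S, j; rewrite expn0 muln1 add0n; split.
pose G t a := epsilon (inhabits 0%N) (fun i => (i < p)%N /\ bad phi e t.+1 (a + i * p ^ t)).
have hbad : forall t, bad phi e t (seqa G t).
  elim=> [|t IH] //=.
  have := epsilon_spec (inhabits 0%N) (fun i => (i < p)%N /\ bad phi e t.+1 (seqa G t + i * p ^ t)) (bad_step IH).
  by case.
pose u := fun t => ((seqa G t)%:R : K).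
have hcau : cauchy_seq abs u.
  move=> d hd; have [t ht] := pow_small hd; exists t => m n hm hn.
  wlog hnm : m n hm hn / (n <= m)%N.
    move=> hw; have [h|h] := leqP n m; first exact: hw.
    by rewrite absB; apply: hw => //; apply: ltnW.
  have [c hc] := seqa_mod G hnm.
  rewrite /u hc natrD addrAC subrr add0r.
  apply: le_lt_trans (abs_natmulp c n) _; apply: le_lt_trans _ ht; exact: pow_mono hn.
have [z hz] := complete hC hcau.
have hzZ : in_Zp abs z.
  move=> d hd; have [N hN] := hz d hd; exists (seqa G N); rewrite absB; exact: hN N (leqnn N).
have [d hd hcont] := hphi z hzZ e he.
have [t1 ht1] := pow_small hd; have [N hN] := hz d hd.
pose t := (t1 + N)%N.
have htd : abs (p%:R) ^+ t < d by apply: le_lt_trans _ ht1; apply: pow_mono; apply: leq_addr.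
have hat : abs ((seqa G t)%:R - z) < d by apply: hN; apply: leq_addl.
have [s [q [hs hle]]] := hbad t t.
have h1 : abs ((seqa G t + q * p ^ t)%:R - z) < d by apply: near_nat.
have h2 : abs ((seqa G t + q * p ^ t + p ^ s)%:R - z) < d.
  have -> : (seqa G t + q * p ^ t + p ^ s = seqa G t + (q + p ^ (s - t)) * p ^ t)%N.
    by rewrite mulnDl -expnD subnK // addnA.
  by apply: near_nat.
have := ultraB_lt (hcont _ (in_Zp_nat _) h2) (hcont _ (in_Zp_nat _) h1).
rewrite opprB addrA subrK.
by rewrite ltNge hle.
Qed.

Lemma bounded_nat phi : cont_Zp abs phi -> exists M, 1 <= M /\ forall j, abs (phi j%:R) <= M.
Proof.
move=> hphi; have [s hs] := unif_shift hphi ltr01.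
pose L := (p ^ s)%N.
exists (1 + \sum_(i < L) abs (phi i%:R)); split.
  by rewrite lerDl sumr_ge0 // => i _; apply: abs_ge0'.
elim/ltn_ind => j IH.
have [hj|hj] := ltnP j L.
  have h1 : abs (phi j%:R) <= \sum_(i < L) abs (phi i%:R).
    by rewrite (bigD1 (Ordinal hj)) //= lerDl sumr_ge0 // => i _; apply: abs_ge0'.
  by apply: le_trans h1 _; rewrite lerDr.
have hL : (0 < L)%N by rewrite expn_gt0 (ltn_trans _ p_gt1).
have hjL : (j - L < j)%N by rewrite ltn_subrL hL (leq_trans hL hj).
have := hs (j - L)%N; rewrite subnK // => h.
have -> : phi j%:R = (phi j%:R - phi (j - L)%N%:R) + phi (j - L)%N%:R by rewrite subrK.
apply: ultra; last exact: IH.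
apply: le_trans (ltW h) _; rewrite lerDl sumr_ge0 // => i _; apply: abs_ge0'.
Qed.

Lemma bounded_Zp phi : cont_Zp abs phi -> exists M, 1 <= M /\ forall x, in_Zp abs x -> abs (phi x) <= M.
Proof.
move=> hphi; have [M [hM1 hM]] := bounded_nat hphi; exists M; split => // x hx.
have [d hd hc] := hphi x hx 1 ltr01.
have [n hn] := hx d hd.
have h : abs (phi n%:R - phi x) < 1 by apply: hc; [apply: in_Zp_nat | rewrite absB].
have -> : phi x = phi n%:R - (phi n%:R - phi x) by rewrite opprB addrC subrK.
apply: ultraB; first exact: hM.
exact: le_trans (ltW h) hM1.
Qed.

Lemma mahler_decay phi : cont_Zp abs phi -> tz (fun k => iter k (@nabla K) phi 0).
Proof.
move=> hphi e he.
have [M [hM1 hM]] := bounded_nat hphi.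
have hM0 : 0 < M by apply: lt_le_trans ltr01 hM1.
have he2 : 0 < e / 2 by rewrite divr_gt0.
have [s hs] := unif_shift hphi he2.
pose L := (p ^ s)%N; pose q := abs (p%:R).
have hq0 : 0 <= q by apply: abs_ge0'.
have hq1 : q <= 1 by apply: ltW; apply: abs_p_lt1.
have key : forall m j, abs (iter (m * L) (@nabla K) phi j%:R) <= Num.max (e / 2) (q ^+ m * M).
  elim=> [|m IH] j.
    by rewrite mul0n /= expr0 mul1r le_max hM orbT.
  rewrite mulSn iterD.
  apply: le_trans (nabla_pow_bound (e := e / 2) (B := Num.max (e / 2) (q ^+ m * M)) (s := s) _ _ _ _ _) _.
  - exact: ltW.
  - by rewrite le_max ltW.
  - exact: IH.
  - by move=> i; apply: iter_nabla_shift => [|i']; [apply: ltW | exact: ltW (hs i')].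
  rewrite maxr_pMr // ge_max le_max lexx /= ge_max.
  apply/andP; split; rewrite le_max; apply/orP; [left | right].
    by rewrite -[X in _ <= X]mul1r ler_wpM2r // ltW.
  by rewrite exprS mulrA.
have [m hm] := pow_small (divr_gt0 he2 hM0).
exists (m * L)%N => n hn.
have hb : forall j, abs (iter (m * L) (@nabla K) phi j%:R) <= e / 2.
  move=> j; apply: le_trans (key m j) _; rewrite ge_max lexx /=.
  by rewrite -ler_pdivlMr // ltW.
rewrite -(subnK hn) iterD.
have := iter_nabla_nat_bound (n - m * L) (ltW he2) hb 0%N; rewrite mulr0n => h.
by apply: le_lt_trans h _; rewrite ltr_pdivrMr // ltr_pMr // ltr1n.
Qed.


Definition St y (phi : K -> K) x k : K :=
  (-1) ^+ k * (k`!)%:R * binom y k * binom x k * phi (x - k%:R).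

Lemma SopE y phi x : Sop abs y phi x = sumK abs (St y phi x).
Proof. by []. Qed.

Lemma St_tz y phi x M : in_Zp abs y -> in_Zp abs x ->
  (forall z, in_Zp abs z -> abs (phi z) <= M) -> tz (St y phi x).
Proof.
move=> hy hx hM.
apply: tz_le (tz_mulr (B := M) tz_fact (v := fun k => (-1) ^+ k * binom y k * binom x k * phi (x - k%:R)) _) _.
  move=> k; rewrite (absM hC) (absM hC) (absM hC) abs_sign mul1r.
  have h1 := binom_le1 k hy; have h2 := binom_le1 k hx; have h3 := hM _ (in_Zp_subn k hx).
  have h4 := abs_ge0' (binom y k); have h5 := abs_ge0' (binom x k).
  apply: le_trans (ler_wpM2l (mulr_ge0 h4 h5) h3) _.
  have h6 : abs (binom y k) * abs (binom x k) <= 1.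
    by apply: le_trans (ler_wpM2l h4 h2) _; rewrite mulr1.
  have hM0 : 0 <= M by apply: le_trans (hM _ hx); apply: abs_ge0'.
  by apply: le_trans (ler_wpM2r hM0 h6) _; rewrite mul1r.
by move=> k; rewrite /St /= le_eqVlt; apply/orP; left; apply/eqP; congr abs; ring.
Qed.

Lemma binomS_div y k : binom y k.+1 = y * binom (y - 1) k / (k.+1)%:R.
Proof.
have h2 : (k.+1)%:R != 0 :> K by rewrite char0.
by rewrite -binom_absorb mulfK.
Qed.

Lemma part_i y phi x : in_Zp abs y -> cont_Zp abs phi -> in_Zp abs x ->
  Sop abs y (sigma phi) x = Sop abs y phi (x + 1) + y * Sop abs (y - 1) phi x.
Proof.
move=> hy hphi hx.
have [M [hM1 hM]] := bounded_Zp hphi.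
have hsM : forall z, in_Zp abs z -> abs (sigma phi z) <= M.
  by move=> z hz; apply: hM; apply: in_Zp_add1.
have [L hL] := tz_has_sum (St_tz hy hx hsM).
have [Q hQ] := tz_has_sum (St_tz (in_Zp_sub1 hy) hx hM).
have hR : has_sum abs (St y phi (x + 1)) (L - y * Q).
  have h1 := has_sumD (has_sum_shift hL) (has_sumZ (- y) hQ).
  have h2 : has_sum abs (fun n => St y phi (x + 1) n.+1) (L - St y (sigma phi) x 0%N - y * Q).
    rewrite mulNr in h1; apply: has_sum_ext h1 => k /=.
    rewrite /St /sigma binomS.
    have -> : x + 1 - (k.+1)%:R = x - k%:R by rewrite mulrSr; ring.
    have -> : x - (k.+1)%:R + 1 = x - k%:R by rewrite mulrSr; ring.
    rewrite binomS_div factS natrM.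
    have h2 : (k.+1)%:R != 0 :> K by rewrite char0.
    by rewrite exprS; field; rewrite addrC -mulrSr.
  have := has_sum_unshift h2.
  have -> : St y phi (x + 1) 0%N = St y (sigma phi) x 0%N.
    by rewrite /St /sigma !binom0 mulr0n !subr0.
  have -> : St y (sigma phi) x 0%N + (L - St y (sigma phi) x 0%N - y * Q) = L - y * Q by ring.
  by [].
rewrite !SopE (sumK_eq hL) (sumK_eq hQ) (sumK_eq hR).
by ring.
Qed.

Lemma mahler_nat_gen (f : K -> K) (e : nat -> K) :
  (forall j, f j%:R = \sum_(k < j.+1) e k * ('C(j, k))%:R) ->
  forall k j, iter k (@nabla K) f j%:R = \sum_(i < j.+1) e (i + k)%N * ('C(j, i))%:R.
Proof.
move=> hf; elim=> [|k IH] j.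
  by rewrite /= hf; apply: eq_bigr => i _; rewrite addn0.
rewrite iterS /nabla -mulrSr !IH.
rewrite big_ord_recl /= bin0 add0n.
have E : forall i : 'I_j.+1, e (bump 0 i + k)%N * ('C(j.+1, bump 0 i))%:R
   = e (i + k.+1)%N * ('C(j, i.+1))%:R + e (i + k.+1)%N * ('C(j, i))%:R.
  by move=> i; rewrite /bump /= add1n binS natrD addSn addnS mulrDr.
rewrite (eq_bigr _ (fun i _ => E i)) big_split /=.
rewrite [X in _ - X]big_ord_recl /= bin0 add0n.
rewrite [X in _ + (X + _) - _]big_ord_recr /= bin_small // mulr0 addr0.
have E2 : forall i : 'I_j, e (i + k.+1)%N * ('C(j, i.+1))%:R = e (bump 0 i + k)%N * ('C(j, bump 0 i))%:R.
  by move=> i; rewrite /bump /= add1n addSn addnS.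
rewrite (eq_bigr _ (fun i _ => E2 i)).
by ring.
Qed.

Lemma mahler_nat (f : K -> K) (e : nat -> K) :
  (forall j, f j%:R = \sum_(k < j.+1) e k * ('C(j, k))%:R) ->
  forall k, iter k (@nabla K) f 0 = e k.
Proof.
move=> hf k; have := mahler_nat_gen hf k 0.
by rewrite mulr0n big_ord1 /= add0n bin0 mulr1.
Qed.

Lemma has_sum_finC (a : nat -> K) j : (forall k, (j < k)%N -> a k = 0) ->
  sumK abs a = \sum_(k < j.+1) a k.
Proof. by move=> h; apply: sumK_eq; apply: has_sum_fin. Qed.

Definition omega y k : K := (-1) ^+ k * (k`!)%:R * binom y k.

Lemma omx_nat y j : omx_pow abs y j%:R = \sum_(k < j.+1) omega y k * ('C(j, k))%:R.
Proof.
rewrite /omx_pow SopE (has_sum_finC (j := j)).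
  by apply: eq_bigr => k _; rewrite /St /omega /one_fun binom_nat mulr1.
by move=> k hk; rewrite /St binom_nat bin_small // mulr0 mul0r.
Qed.

Lemma omx_coef y k : iter k (@nabla K) (omx_pow abs y) 0 = omega y k.
Proof. by apply: mahler_nat; apply: omx_nat. Qed.

Lemma omega_S y k : omega y k.+1 = - y * omega (y - 1) k.
Proof.
rewrite /omega binomS_div factS natrM exprS.
have h2 : (k.+1)%:R != 0 :> K by rewrite char0.
by field; rewrite addrC -mulrSr.
Qed.

Lemma omega_tz y : in_Zp abs y -> tz (omega y).
Proof.
move=> hy; apply: tz_le (tz_mulr (B := 1) tz_fact (v := fun k => (-1) ^+ k * binom y k) _) _.
  by move=> k; rewrite (absM hC) abs_sign mul1r; apply: binom_le1.
by move=> k; rewrite /omega le_eqVlt; apply/orP; left; apply/eqP; congr abs; ring.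
Qed.


Definition coef (A B : nat -> K) n : K :=
  \sum_(k < n.+1) ('C(n, k))%:R * A k * B (n - k)%N.

Lemma convE psi phi x : conv abs psi phi x =
  sumK abs (fun n => coef (fun k => iter k (@nabla K) psi 0) (fun k => iter k (@nabla K) phi 0) n * binom x n).
Proof. by []. Qed.

Lemma coefS A B n : coef A B n.+1 =
  \sum_(k < n.+1) ('C(n, k))%:R * A k * B (n - k).+1 + \sum_(k < n.+1) ('C(n, k))%:R * A k.+1 * B (n - k)%N.
Proof.
rewrite /coef big_ord_recl /= bin0 subn0.
have E : forall i : 'I_n.+1, ('C(n.+1, bump 0 i))%:R * A (bump 0 i) * B (n.+1 - bump 0 i)%N
   = ('C(n, i.+1))%:R * A i.+1 * B (n - i)%N + ('C(n, i))%:R * A i.+1 * B (n - i)%N.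
  by move=> i; rewrite /bump /= add1n subSS binS natrD !mulrDl.
rewrite (eq_bigr _ (fun i _ => E i)) big_split /= addrA.
congr (_ + _).
rewrite [in RHS]big_ord_recl /= bin0 subn0 [X in _ + X = _]big_ord_recr /= bin_small // mul0r mul0r addr0.
congr (_ + _); apply: eq_bigr => i _.
rewrite /bump /= add1n; congr (_ * B _).
by have := ltn_ord i; lia.
Qed.

Lemma coef_sigma A B C lam n :
  (forall k, A k.+1 = lam * C k) ->
  coef A (fun m => B m + B m.+1) n = coef A B n + coef A B n.+1 - lam * coef C B n.
Proof.
move=> hAC; rewrite coefS /coef.
have E : forall k : 'I_n.+1, ('C(n, k))%:R * A k * (B (n - k)%N + B (n - k).+1)
  = ('C(n, k))%:R * A k * B (n - k)%N + ('C(n, k))%:R * A k * B (n - k).+1 by move=> k; rewrite mulrDr.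
rewrite (eq_bigr _ (fun k _ => E k)) big_split /=.
have -> : \sum_(k < n.+1) ('C(n, k))%:R * A k.+1 * B (n - k)%N = lam * \sum_(k < n.+1) ('C(n, k))%:R * C k * B (n - k)%N.
  rewrite mulr_sumr; apply: eq_bigr => k _; rewrite hAC; ring.
by ring.
Qed.

Lemma tz_coef A B : tz A -> tz B -> tz (coef A B).
Proof.
move=> hA hB e he.
have [MA [hMA hA']] := tz_bounded hA; have [MB [hMB hB']] := tz_bounded hB.
have [NA hNA] := hA (e / MB) (divr_gt0 he hMB).
have [NB hNB] := hB (e / MA) (divr_gt0 he hMA).
exists (NA + NB)%N => n hn; apply: ultra_sum_lt => // k _.
rewrite (absM hC) (absM hC).
have hc := abs_nat 'C(n, k); have h0 := abs_ge0' ('C(n, k))%:R.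
have ha0 := abs_ge0' (A k); have hb0 := abs_ge0' (B (n - k)%N).
have hab : abs (A k) * abs (B (n - k)%N) < e.
  have [hk|hk] := leqP NA k.
    have h1 := hNA k hk; rewrite ltr_pdivlMr // in h1.
    by apply: le_lt_trans _ h1; apply: ler_wpM2l.
  have hk' : (NB <= n - k)%N by lia.
  have h1 := hNB _ hk'; rewrite ltr_pdivlMr // in h1.
  by apply: le_lt_trans _ h1; rewrite mulrC; apply: ler_wpM2l.
apply: le_lt_trans _ hab; rewrite -mulrA.
by apply: le_trans (ler_wpM2r (mulr_ge0 ha0 hb0) hc) _; rewrite mul1r.
Qed.

Lemma iter_nabla_sigma (phi : K -> K) n z :
  iter n (@nabla K) (sigma phi) z = iter n (@nabla K) phi (z + 1).
Proof.
by elim: n z => [|n IH] z //=; rewrite /nabla !IH.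
Qed.

Lemma conv_shift psi chi phi lam x : in_Zp abs x ->
  tz (fun k => iter k (@nabla K) psi 0) -> tz (fun k => iter k (@nabla K) chi 0) ->
  tz (fun k => iter k (@nabla K) phi 0) ->
  (forall k, iter k.+1 (@nabla K) psi 0 = lam * iter k (@nabla K) chi 0) ->
  conv abs psi (sigma phi) x = conv abs psi phi (x + 1) - lam * conv abs chi phi x.
Proof.
move=> hx hA hC' hB hAC.
set A := fun k => iter k (@nabla K) psi 0.
set C := fun k => iter k (@nabla K) chi 0.
set B := fun k => iter k (@nabla K) phi 0.
have hBs : forall k, iter k (@nabla K) (sigma phi) 0 = B k + B k.+1.
  move=> k; rewrite iter_nabla_sigma add0r /B iterS /nabla.
  by rewrite add0r addrC subrK.
have hbx : forall n, abs (binom x n) <= 1 by move=> n; apply: binom_le1.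
have hT : forall D, tz D -> exists s, has_sum abs (fun n => D n * binom x n) s.
  by move=> D hD; apply: tz_has_sum; apply: tz_mulr hD hbx.
have [G hG] := hT _ (tz_coef hA hB).
have [H hH] : exists s, has_sum abs (fun n => coef A B n.+1 * binom x n) s.
  apply: (hT (fun n => coef A B n.+1)) => e he.
  have [N hN] := tz_coef hA hB he; exists N => n hn; apply: hN; exact: leqW.
have [D hD] := hT _ (tz_coef hC' hB).
have h1 : has_sum abs (fun n => coef A (fun m => iter m (@nabla K) (sigma phi) 0) n * binom x n) (G + H - lam * D).
  have h := has_sumD (has_sumD hG hH) (has_sumZ (- lam) hD).
  rewrite mulNr in h; apply: has_sum_ext h => n /=.
  rewrite (_ : coef A (fun m => iter m (@nabla K) (sigma phi) 0) n = coef A (fun m => B m + B m.+1) n).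
    by rewrite (coef_sigma _ _ hAC); ring.
  by rewrite /coef; apply: eq_bigr => k _; rewrite hBs.
have h2 : has_sum abs (fun n => coef A B n * binom (x + 1) n) (G + H).
  have h := has_sumD (has_sum_shift hG) hH.
  have h' : has_sum abs (fun n => coef A B n.+1 * binom (x + 1) n.+1) (G - coef A B 0%N * binom x 0%N + H).
    apply: has_sum_ext h => n /=; rewrite binomS; ring.
  have := has_sum_unshift (a := fun n => coef A B n * binom (x + 1) n) h'.
  by rewrite !binom0; have -> : coef A B 0%N * 1 + (G - coef A B 0%N * 1 + H) = G + H by ring.
rewrite !convE (sumK_eq h1) (sumK_eq h2) (sumK_eq hD).
by [].
Qed.


Lemma tz_ext u v : (forall n, u n = v n) -> tz u -> tz v.
Proof. by move=> h hu e he; have [N hN] := hu e he; exists N => n hn; rewrite -h; apply: hN. Qed.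

Lemma omx_tz y : in_Zp abs y -> tz (fun k => iter k (@nabla K) (omx_pow abs y) 0).
Proof. by move=> hy; apply: tz_ext (omega_tz hy) => k; rewrite omx_coef. Qed.

Lemma part_ii_conv phi x y : cont_Zp abs phi -> in_Zp abs x -> in_Zp abs y ->
  conv abs (omx_pow abs y) (sigma phi) x
  = conv abs (omx_pow abs y) phi (x + 1) + y * conv abs (omx_pow abs (y - 1)) phi x.
Proof.
move=> hphi hx hy.
rewrite (@conv_shift _ (omx_pow abs (y - 1)) _ (- y)) //.
- by rewrite mulNr opprK.
- exact: omx_tz.
- by apply: omx_tz; apply: in_Zp_sub1.
- exact: mahler_decay.
- by move=> k; rewrite !omx_coef omega_S.
Qed.

Lemma in_Zp_int (n : int) : in_Zp abs (n%:~R).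
Proof.
case: n => m; first exact: in_Zp_nat.
rewrite NegzE intrN -[- _]add0r; apply: in_Zp_subn; exact: (in_Zp_nat 0).
Qed.

Lemma abs_signz (n : int) : abs ((-1) ^ n) = 1.
Proof.
case: n => m; first by rewrite -exprnP abs_sign.
by rewrite NegzE -exprnN absV abs_sign invr1.
Qed.

Definition alpha (n : int) k : K := (-1) ^ n * omega (n%:~R) k.

Lemma abs_alpha n k : abs (alpha n k) <= abs ((k`!)%:R).
Proof.
rewrite /alpha /omega (absM hC) abs_signz mul1r (absM hC) (absM hC) abs_sign mul1r.
by apply: le_trans (ler_wpM2l (abs_ge0' _) (binom_le1 k (in_Zp_int n))) _; rewrite mulr1.
Qed.

Lemma alpha_S n k : alpha n k.+1 = n%:~R * alpha (n - 1) k.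
Proof.
rewrite /alpha omega_S intrD intrN.
have hm1 : (-1 : K) != 0 by rewrite oppr_eq0 oner_eq0.
rewrite expfzDr // exprN1 invrN1.
by ring.
Qed.

Lemma xm1_nat n j : xm1_pow abs n j%:R = \sum_(k < j.+1) alpha n k * ('C(j, k))%:R.
Proof.
rewrite /xm1_pow -/(omx_pow abs _ _) omx_nat mulr_sumr.
by apply: eq_bigr => k _; rewrite /alpha mulrA.
Qed.

Lemma decay_tz (a : int -> K) N : decays_at_minfty abs a -> tz (fun m => a (N - m%:Z)).
Proof.
move=> ha e he; have [M hM] := ha e he; exists `|N - M|%N => n hn.
by apply: hM; lia.
Qed.

Definition Acoef (a : int -> K) N k : K := sumK abs (fun m => a (N - m%:Z) * alpha (N - m%:Z) k).

Lemma Acoef_sum a N k : decays_at_minfty abs a ->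
  has_sum abs (fun m => a (N - m%:Z) * alpha (N - m%:Z) k) (Acoef a N k).
Proof.
move=> ha.
have hb : forall m : nat, abs (alpha (N - m%:Z) k) <= 1.
  by move=> m; apply: le_trans (abs_alpha _ _) _; apply: abs_nat.
have [s hs] := tz_has_sum (tz_mulr (decay_tz N ha) hb).
by rewrite /Acoef (sumK_eq hs).
Qed.

Lemma Afun_nat a N j : decays_at_minfty abs a ->
  Afun abs a N j%:R = \sum_(k < j.+1) Acoef a N k * ('C(j, k))%:R.
Proof.
move=> ha; rewrite /Afun; apply: sumK_eq.
have h := has_sum_big (m := j.+1)
  (F := fun k m => ('C(j, k))%:R * (a (N - m%:Z) * alpha (N - m%:Z) k))
  (S := fun k => ('C(j, k))%:R * Acoef a N k) (fun k _ => has_sumZ _ (@Acoef_sum a N k ha)).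
rewrite (eq_bigr (fun k : 'I_j.+1 => ('C(j, k))%:R * Acoef a N k)) => [|k _]; last by rewrite mulrC.
apply: has_sum_ext h => m /=; rewrite xm1_nat mulr_sumr; apply: eq_bigr => k _; ring.
Qed.

Lemma Afun_coef a N k : decays_at_minfty abs a ->
  iter k (@nabla K) (Afun abs a N) 0 = Acoef a N k.
Proof. by move=> ha; apply: mahler_nat => j; apply: Afun_nat. Qed.

Lemma tz_Acoef a N : decays_at_minfty abs a -> tz (Acoef a N).
Proof.
move=> ha; have [Ma [hMa hMa']] := tz_bounded (decay_tz N ha).
move=> e he; have [n0 hn0] := tz_fact (divr_gt0 he hMa); exists n0 => k hk.
have hb : forall m : nat, abs (a (N - m%:Z) * alpha (N - m%:Z) k) <= Ma * abs ((k`!)%:R).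
  move=> m; rewrite (absM hC); apply: le_trans (ler_wpM2r (abs_ge0' _) (hMa' m)) _.
  by apply: ler_wpM2l; [apply: ltW | apply: abs_alpha].
apply: le_lt_trans (has_sum_bound hb (@Acoef_sum a N k ha)) _.
by rewrite mulrC -ltr_pdivlMr //; apply: hn0.
Qed.

Lemma decays_D a : decays_at_minfty abs a -> decays_at_minfty abs (Dcoef a).
Proof.
move=> ha e he; have [M hM] := ha e he; exists (M - 1) => n hn.
rewrite /Dcoef (absM hC); apply: le_lt_trans (ler_wpM2r (abs_ge0' _) (abs_int _)) _.
by rewrite mul1r; apply: hM; lia.
Qed.

Lemma Acoef_S a N k : Acoef a N k.+1 = Acoef (Dcoef a) (N - 1) k.
Proof.
rewrite /Acoef; congr (sumK abs _).
apply: boolp.funext => m.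
rewrite alpha_S /Dcoef.
have -> : N - 1 - m%:Z + 1 = N - m%:Z by ring.
have -> : N - m%:Z - 1 = N - 1 - m%:Z by ring.
by ring.
Qed.

Lemma part_iii a N phi x : decays_at_minfty abs a -> cont_Zp abs phi -> in_Zp abs x ->
  conv abs (Afun abs a N) (sigma phi) x
  = conv abs (Afun abs a N) phi (x + 1) - conv abs (Afun abs (Dcoef a) (N - 1)) phi x.
Proof.
move=> ha hphi hx.
have hD := decays_D ha.
rewrite (@conv_shift _ (Afun abs (Dcoef a) (N - 1)) _ 1) //.
- by rewrite mul1r.
- by apply: tz_ext (tz_Acoef N ha) => k; rewrite Afun_coef.
- by apply: tz_ext (tz_Acoef (N - 1) (decays_D ha)) => k; rewrite Afun_coef.
- exact: mahler_decay.
- by move=> k; rewrite !Afun_coef // mul1r Acoef_S.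
Qed.

End Basic.

Theorem proposition6p10 (p : nat) (R : realType) (K : fieldType) (abs : K -> R) :
  prime p -> is_Cp abs p ->
  [/\ (* (i) *)
      (forall (y : K) (phi : K -> K), in_Zp abs y -> cont_Zp abs phi ->
         forall x, in_Zp abs x ->
           Sop abs y (sigma phi) x = Sop abs y phi (x + 1) + y * Sop abs (y - 1) phi x),
      (* (ii) *)
      (forall (phi : K -> K) (x y : K), cont_Zp abs phi -> in_Zp abs x -> in_Zp abs y ->
           Top abs x (sigma phi) y = Top abs (x + 1) phi y + y * Top abs x phi (y - 1)),
      (* (ii), convolution form *)
      (forall (phi : K -> K) (x y : K), cont_Zp abs phi -> in_Zp abs x -> in_Zp abs y ->
           conv abs (omx_pow abs y) (sigma phi) x
           = conv abs (omx_pow abs y) phi (x + 1) + y * conv abs (omx_pow abs (y - 1)) phi x)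
    & (* (iii) *)
      (forall (a : int -> K) (N : int) (phi : K -> K) (x : K),
           decays_at_minfty abs a -> cont_Zp abs phi -> in_Zp abs x ->
           conv abs (Afun abs a N) (sigma phi) x
           = conv abs (Afun abs a N) phi (x + 1) - conv abs (Afun abs (Dcoef a) (N - 1)) phi x)].
Proof.
move=> hp hC; split.
- by move=> y phi hy hphi x hx; apply: (part_i hp hC).
- by move=> phi x y hphi hx hy; rewrite /Top; apply: (part_i hp hC).
- by move=> phi x y hphi hx hy; apply: (part_ii_conv hp hC).
- by move=> a N phi x ha hphi hx; apply: (part_iii hp hC).
Qed.
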